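(* Under the standing assumptions below, for all $c,d,e\in I$ and $k\in\{0,\dots,n\}$: if $c\prec_k d$, $c\prec_k e$ and $d\prec e$, then $d\prec_k e$.
   Context: Standing assumptions: $I$ is a finite set of weighted constraints with default values on a finite domain $D$ such that distinct constraints have distinct variable sets, $\mathcal H(I)=(\mathrm{var}(I),\{\mathrm{var}(c)\mid c\in I\})$ is $\beta$-acyclic, and $(x_1,\dots,x_n)$ is a $\beta$-elimination order of $\mathcal H(I)$ (an enumeration of $\mathrm{var}(I)$ such that for each $k$, $x_{k+1}$ is a nest point—the edges containing it are totally ordered by inclusion—of the hypergraph with vertices $\mathrm{var}(I)\setminus X_k$ and edges $\{e\setminus X_k\}\setminus\{\emptyset\}$). $X_k=\{x_1,\dots,x_k\}$. For $c,d\in I$: $c\prec d$ iff there is $k$ with $\mathrm{var}(c)\setminus X_k\subsetneq\mathrm{var}(d)\setminus X_k$; $c\preceq d$ iff $c\prec d$ or $c=d$. Relations $\prec_k$ are defined inductively: $\prec_0=\emptyset$; $c\prec_{k+1}d$ iff $c\prec_k d$ or there is $e\in I$ with $c\preceq_k e\prec d$ and $x_{k+1}\in\mathrm{var}(d)\cap\mathrm{var}(e)$; here $c\preceq_k d$ iff $c=d$ or $c\prec_k d$. *)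

(* Defs.v *)
From mathcomp Require Import all_boot.
Set Implicit Arguments. Unset Strict Implicit. Unset Printing Implicit Defensive.

Section BetaOrder.
Variables (V : finType) (I : finType) (var : I -> {set V}) (xs : seq V).

Definition varI : {set V} := \bigcup_(c : I) var c.

Definition Xk (k : nat) : {set V} := [set x in take k xs].

(* x_{k+1} is a nest point of the hypergraph with vertices var(I)\X_k and
   edges {var c \ X_k} \ {emptyset}: the edges containing it are totally
   ordered by inclusion. *)
Definition nest_point_at (k : nat) (x : V) : Prop :=
  forall c d : I, x \in var c :\: Xk k -> x \in var d :\: Xk k ->
    (var c :\: Xk k \subset var d :\: Xk k) \/ (var d :\: Xk k \subset var c :\: Xk k).

Definition beta_elim_order : Prop :=
  [/\ uniq xs, [set x in xs] = varI &
      forall k x, onth xs k = Some x -> nest_point_at k x ]%type.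

Definition prec (c d : I) : bool :=
  [exists k : 'I_(size xs).+1, (var c :\: Xk k) \proper (var d :\: Xk k)].

Definition preceq (c d : I) : bool := (c == d) || prec c d.

Fixpoint preck (k : nat) (c d : I) : bool :=
  match k with
  | 0 => false
  | k'.+1 =>
      preck k' c d ||
      [exists e : I, ((c == e) || preck k' c e) && prec e d &&
         (if onth xs k' is Some x then x \in var d :&: var e else false)]
  end.

Definition preceqk (k : nat) (c d : I) : bool := (c == d) || preck k c d.

End BetaOrder.

(* Main.v *)
Require Import Defs.
From mathcomp Require Import all_boot.
Set Implicit Arguments. Unset Strict Implicit.

Section Aux.
Variables (V I : finType) (var : I -> {set V}) (xs : seq V).
Hypothesis Huniq : uniq xs.
Hypothesis Hnest : forall k x, onth xs k = Some x -> nest_point_at var xs k x.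
Local Notation S k c := (var c :\: Xk xs k).

Lemma Xk_mono j k : j <= k -> {subset Xk xs j <= Xk xs k}.
Proof.
move=> jk x; rewrite /Xk !inE => H.
by rewrite -(take_takel xs jk) in H; apply: mem_take H.
Qed.

Lemma xnotin k x : onth xs k = Some x -> x \notin Xk xs k.
Proof.
move=> Ho; have := onthTE xs k; rewrite Ho /= => klt.
have Hx := @onth_nth _ x x xs k Ho.
rewrite /Xk inE; move: Huniq; rewrite -{1}(cat_take_drop k xs) cat_uniq.
case/and3P=> _ /hasPn H _.
suff xd : x \in drop k xs by have := H x xd.
have -> : x = nth x (drop k xs) 0 by rewrite nth_drop addn0 Hx.
by apply: mem_nth; rewrite size_drop subn_gt0 -klt.
Qed.

Lemma SM j k a b : j <= k -> S j a \subset S j b -> S k a \subset S k b.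
Proof.
move=> jk /subsetP H; apply/subsetP=> x; rewrite !inE => /andP[nx xa].
rewrite nx /=.
have : x \in S j a.
  by rewrite !inE xa andbT; apply/negP; rewrite -(take_takel xs jk) => /mem_take; rewrite (negbTE nx).
by move/H; rewrite !inE => /andP[_ ->].
Qed.

Lemma Q k a b : prec var xs a b -> S k b \subset S k a -> S k a \subset S k b.
Proof.
case/existsP=> j /properP [Hsub [y yb ya]] Hba.
case: (leqP j k) => [jk|kj]; first exact: SM jk Hsub.
have := SM (ltnW kj) Hba => /subsetP /(_ y yb).
by rewrite (negbTE ya).
Qed.

Lemma inS k x c : onth xs k = Some x -> x \in var c -> x \in S k c.
Proof. by move=> Ho xc; rewrite inE xc andbT xnotin. Qed.

Lemma N k x e d : onth xs k = Some x -> x \in var e -> x \in var d ->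
  prec var xs e d -> S k e \subset S k d.
Proof.
move=> Ho xe xd Hed.
case: (Hnest Ho (inS Ho xe) (inS Ho xd)) => // H; exact: Q.
Qed.

Lemma B k c d : preck var xs k c d -> S k c \subset S k d.
Proof.
elim: k c d => [//|k IH] c d /=.
case/orP => [/IH H | /existsP [f /andP[/andP[cf fd]]]].
  exact: SM (leqnSn k) H.
case Ho: (onth xs k) => [x|//]; rewrite inE => /andP[xd xf].
have H1 : S k c \subset S k f by case/orP: cf => [/eqP->|/IH].
apply: SM (leqnSn k) _; apply: subset_trans H1 _; exact: N Ho xf xd fd.
Qed.

Lemma BE k c d : preceqk var xs k c d -> S k c \subset S k d.
Proof. by case/orP => [/eqP->|/B]. Qed.

Lemma Mix k x d f g : onth xs k = Some x -> x \in var d -> x \in var f ->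
  prec var xs f d -> (S k f \subset S k g) || (S k g \subset S k f) ->
  (S k d \subset S k g) || (S k g \subset S k d).
Proof.
move=> Ho xd xf fd HC.
case xg: (x \in var g).
  by case: (Hnest Ho (inS Ho xd) (inS Ho xg)) => ->; rewrite ?orbT.
case/orP: HC => H.
  by move/subsetP: H => /(_ x (inS Ho xf)); rewrite inE xg andbF.
by rewrite (subset_trans H (N Ho xf xd fd)) orbT.
Qed.

Lemma Lift k d g : (S k d \subset S k g) || (S k g \subset S k d) ->
  (S k.+1 d \subset S k.+1 g) || (S k.+1 g \subset S k.+1 d).
Proof.
by case/orP => H; rewrite (SM (leqnSn k) H) ?orbT.
Qed.

Lemma C k c d g : preceqk var xs k c d -> preceqk var xs k c g ->
  (S k d \subset S k g) || (S k g \subset S k d).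
Proof.
case cd: (c == d); first by move/eqP: cd => <- _ /BE ->.
case cg: (c == g); first by move/eqP: cg => <- /BE -> _; rewrite orbT.
rewrite /preceqk cd cg /=.
elim: k c d g cd cg => [//|k IH] c d g cd cg /=.
have IHe f h : preceqk var xs k c f -> preceqk var xs k c h ->
    (S k f \subset S k h) || (S k h \subset S k f).
  case cf: (c == f); first by move/eqP: cf => <- _ /BE ->.
  case ch: (c == h); first by move/eqP: ch => <- /BE -> _; rewrite orbT.
  rewrite /preceqk cf ch /=; exact: IH.
case/orP => [Hd | /existsP [f /andP[/andP[cf fd] xfd]]];
case/orP => [Hg | /existsP [h /andP[/andP[ch hg] xhg]]].
- by apply: Lift; apply: IHe; rewrite /preceqk ?Hd ?Hg orbT.
- move: xhg; case Ho: (onth xs k) => [x|//]; rewrite inE => /andP[xg xh].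
  apply: Lift; rewrite orbC; apply: (Mix Ho xg xh hg).
  by rewrite orbC; apply: IHe => //; rewrite /preceqk Hd orbT.
- move: xfd; case Ho: (onth xs k) => [x|//]; rewrite inE => /andP[xd xf].
  apply: Lift; apply: (Mix Ho xd xf fd).
  by apply: IHe => //; rewrite /preceqk Hg orbT.
- move: xfd xhg; case Ho: (onth xs k) => [x|//]; rewrite !inE => /andP[xd xf] /andP[xg xh].
  by apply: Lift; case: (Hnest Ho (inS Ho xd) (inS Ho xg)) => ->; rewrite ?orbT.
Qed.

Lemma W k x d e : onth xs k = Some x -> x \in var e -> x \in var d ->
  prec var xs d e -> preck var xs k.+1 d e.
Proof.
move=> Ho xe xd de /=; apply/orP; right; apply/existsP; exists d.
by rewrite eqxx /= de Ho inE xe xd.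
Qed.

End Aux.

Theorem lemma6 (V I : finType) (var : I -> {set V}) (xs : seq V)
    (Hinj : injective var)
    (Hbeta : beta_elim_order var xs)
    (c d e : I) (k : nat) (Hk : k <= size xs) :
  preck var xs k c d -> preck var xs k c e -> prec var xs d e ->
  preck var xs k d e.
Proof.
case: Hbeta => Hu _ Hn.
elim: k Hk c d e => [//|k IH] Hk c d e /=.
case/orP => [Hd | /existsP [f /andP[/andP[cf fd] xfd]]];
case/orP => [He | /existsP [g /andP[/andP[cg ge] xge]]] de.
- by rewrite (IH (ltnW Hk) c d e Hd He de).
- have [x Ho] : exists x, onth xs k = Some x by move: xge; case: (onth xs k) => [x|] //; exists x.
  rewrite Ho in xge; move: xge; move=> /setIP[xe xg].
  case xd: (x \in var d); first exact: (W Ho xe xd de).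
  have := @C _ _ var xs Hu Hn k c d g; rewrite /preceqk Hd cg orbT.
  case/(_ isT isT)/orP => H.
  + have dg : prec var xs d g.
      apply/existsP; exists (@Ordinal (size xs).+1 k (ltnW Hk)); rewrite /=; apply/properP; split => //.
      exists x; [have HH := inS Hu Ho xg; exact HH|].
      by rewrite inE xd andbF.
    have cg' : preck var xs k c g.
      case/orP: cg => [/eqP cg|//]; subst g.
      by move/subsetP: (B Hu Hn Hd) => /(_ x (inS Hu Ho xg)); rewrite inE xd andbF.
    apply/orP; right; apply/existsP; exists g.
    by rewrite (IH (ltnW Hk) c d g Hd cg' dg) orbT ge Ho /= inE xe xg.
  + by move/subsetP: H => /(_ x (inS Hu Ho xg)); rewrite inE xd andbF.
- have [x Ho] : exists x, onth xs k = Some x by move: xfd; case: (onth xs k) => [x|] //; exists x.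
  rewrite Ho in xfd; move: xfd; move=> /setIP[xd xf].
  case xe: (x \in var e); first exact: (W Ho xe xd de).
  have := @C _ _ var xs Hu Hn k c f e; rewrite /preceqk He cf orbT.
  case/(_ isT isT)/orP => H.
  + by move/subsetP: H => /(_ x (inS Hu Ho xf)); rewrite inE xe andbF.
  + have H2 := Q de (subset_trans H (N Hu Hn Ho xf xd fd)).
    by move/subsetP: H2 => /(_ x (inS Hu Ho xd)); rewrite inE xe andbF.
- have [x Ho] : exists x, onth xs k = Some x by move: xfd; case: (onth xs k) => [x|] //; exists x.
  rewrite Ho in xfd; rewrite Ho in xge; move: xfd xge; move=> /setIP[xd xf] /setIP[xe xg].
  exact: (W Ho xe xd de).
Qed.
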